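(* Let $\phi$ assign to each matroid $M$ on $E$ the class in $K_T^0(X_E)$ given by a fixed polynomial expression in the exterior powers of $[\mathcal S_M]$, $[\mathcal Q_M]$, $[\mathcal S_M^\vee]$, $[\mathcal Q_M^\vee]$, and let $\psi$ assign to $M$ the (equivariant or non-equivariant) Chow class on $X_E$ given by a fixed polynomial expression in the (equivariant or non-equivariant, respectively) Chern classes of $[\mathcal S_M]$, $[\mathcal Q_M]$ and their duals. Then $\phi$ and $\psi$ are valuative.
   Context: $E=\{0,\dots,n\}$, $T=(\mathbb C^* )^E$, $X_E$ the permutohedral variety (toric variety of the fan in $\mathbb R^E/\mathbb R\mathbf 1$ with cones $\operatorname{Cone}(\overline{\mathbf e}_{S_1},\dots,\overline{\mathbf e}_{S_k})$ for chains of nonempty proper subsets), fixed points $p_\sigma$ indexed by permutations of $E$; $K_T^0(X_E)$ embeds in $\prod_\sigma\mathbb Z[T_0^{\pm1},\dots,T_n^{\pm1}]$ by restriction. $B_\sigma(M)$ is the lexicographically first basis for the order $\sigma(0)\prec\cdots\prec\sigma(n)$; $[\mathcal S_M],[\mathcal Q_M]\in K_T^0(X_E)$ restrict at $p_\sigma$ to $\sum_{i\in B_\sigma(M)}T_i^{-1}$ and $\sum_{i\notin B_\sigma(M)}T_i^{-1}$; $\vee$ is dual. The base polytope of $M$ is $P(M)=\operatorname{Conv}(\sum_{i\in B}\mathbf e_i: B\text{ a basis})\subset\mathbb R^E$, and $1_P$ denotes the indicator function. A function $\phi$ from matroids on $E$ to an abelian group is valuative if whenever $M_1,\dots,M_\ell$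 are matroids on $E$ and $a_i\in\mathbb Z$ with $\sum_ia_i1_{P(M_i)}=0$, one has $\sum_ia_i\phi(M_i)=0$. *)

(* Defs.v *)
From HB Require Import structures.
From mathcomp Require Import all_boot all_order all_algebra all_fingroup fraction.
From mathcomp Require Import boolp reals.
From mathcomp Require Import mpoly.

Set Implicit Arguments.
Unset Strict Implicit.
Unset Printing Implicit Defensive.

Import Order.TTheory GRing.Theory Num.Theory.
Local Open Scope ring_scope.

(* Ground set E = {0,...,n} is 'I_n.+1. *)

Definition basis_exchange (n : nat) (bs : {set {set 'I_n.+1}}) : bool :=
  [forall B1 in bs, forall B2 in bs, forall x in B1 :\: B2,
     exists y in B2 :\: B1, (y |: (B1 :\ x)) \in bs].

Record matroid (n : nat) := Matroid {
  bases : {set {set 'I_n.+1}};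
  bases_neq0 : bases != set0;
  bases_exchange : basis_exchange bases }.

(* Lexicographic comparison of subsets for the total order
   sigma(0) < sigma(1) < ... < sigma(n): B <=lex B' iff B = B' or the
   smallest element (for this order) of the symmetric difference lies in B. *)
Definition lex_le (n : nat) (s : {perm 'I_n.+1}) (B B' : {set 'I_n.+1}) : bool :=
  (B == B') ||
  [exists i in B :\: B',
     forall j, ((s^-1)%g j < (s^-1)%g i)%N ==> ((j \in B) == (j \in B'))].

Definition lexfirst_basis (n : nat) (M : matroid n) (s : {perm 'I_n.+1})
  : {set 'I_n.+1} :=
  odflt set0 [pick B in bases M | [forall B' in bases M, lex_le s B B']].

Definition in_base_polytope (R : realType) (n : nat) (M : matroid n)
  (x : 'I_n.+1 -> R) : Prop :=
  exists l : {set 'I_n.+1} -> R,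
    [/\ forall B, 0 <= l B,
        forall B, B \notin bases M -> l B = 0,
        \sum_B l B = 1 &
        forall i, x i = \sum_B l B * (i \in B)%:R].

Definition indic_P (R : realType) (n : nat) (M : matroid n)
  (x : 'I_n.+1 -> R) : int :=
  if `[< in_base_polytope M x >] then 1 else 0.

Definition valuative (R : realType) (n : nat) (V : zmodType)
  (phi : matroid n -> V) : Prop :=
  forall s : seq (int * matroid n),
    (forall x : 'I_n.+1 -> R, \sum_(p <- s) p.1 * indic_P p.2 x = 0) ->
    \sum_(p <- s) phi p.2 *~ p.1 = 0.

Definition esym (A : comNzRingType) (n : nat) (k : nat)
  (D : {set 'I_n.+1}) (f : 'I_n.+1 -> A) : A :=
  \sum_(S : {set 'I_n.+1} | (S \subset D) && (#|S| == k)) \prod_(i in S) f i.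

Definition ieval (A : comNzRingType) (m : nat) (h : 'I_m -> A)
  (F : {mpoly int[m]}%R) : A :=
  mpoly.mmap (fun z : int => z%:~R) h F.

(* Localization ring for K_T^0(X_E): Laurent polynomials Z[T_0^+-1..T_n^+-1],
   realized inside the fraction field of Z[T_0..T_n]. *)
Definition Laurent (n : nat) := {fraction {mpoly int[n.+1]}%R}.
Definition Tvar (n : nat) (i : 'I_n.+1) : Laurent n := tofrac ('X_i)%R.

(* Restriction to p_sigma of the four classes, labelled by 'I_4:
   0 : [S_M] = sum_{i in B} T_i^-1,   1 : [Q_M] = sum_{i notin B} T_i^-1,
   2 : [S_M^v] = sum_{i in B} T_i,    3 : [Q_M^v] = sum_{i notin B} T_i.
   The k-th exterior power of a sum of characters restricts to e_k of them. *)
Definition ext_power_loc (n : nat) (M : matroid n) (s : {perm 'I_n.+1})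
  (c : 'I_4) (k : nat) : Laurent n :=
  let B := lexfirst_basis M s in
  match val c with
  | 0 => esym k B (fun i => (Tvar i)^-1)
  | 1 => esym k (~: B) (fun i => (Tvar i)^-1)
  | 2 => esym k B (@Tvar n)
  | _ => esym k (~: B) (@Tvar n)
  end.

(* phi(M) in K_T^0(X_E), via its restrictions to all fixed points p_sigma:
   F(lambda^{k_j}(class c_j))_j for a fixed integer polynomial F in m variables,
   variable j standing for the k_j-th exterior power of class c_j. *)
Definition K_class (n m : nat) (F : {mpoly int[m]}%R) (idx : 'I_m -> 'I_4 * nat)
  (M : matroid n) : {ffun {perm 'I_n.+1} -> Laurent n} :=
  [ffun s => ieval (fun j => ext_power_loc M s (idx j).1 (idx j).2) F].

(* Equivariant Chow ring A_T^*(X_E), embedded by localization in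
   prod_sigma Z[t_0,...,t_n]; the character T_i has weight t_i, so
   c^T(sum of characters chi) restricts to prod (1 + chi). *)
Definition Tpoly (n : nat) := {mpoly int[n.+1]}%R.
Definition tvar (n : nat) (i : 'I_n.+1) : Tpoly n := ('X_i)%R.

Definition chern_loc (n : nat) (M : matroid n) (s : {perm 'I_n.+1})
  (c : 'I_4) (k : nat) : Tpoly n :=
  let B := lexfirst_basis M s in
  match val c with
  | 0 => esym k B (fun i => - tvar i)
  | 1 => esym k (~: B) (fun i => - tvar i)
  | 2 => esym k B (@tvar n)
  | _ => esym k (~: B) (@tvar n)
  end.

Definition chow_classT (n m : nat) (F : {mpoly int[m]}%R)
  (idx : 'I_m -> 'I_4 * nat) (M : matroid n) : {ffun {perm 'I_n.+1} -> Tpoly n} :=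
  [ffun s => ieval (fun j => chern_loc M s (idx j).1 (idx j).2) F].

(* GKM description of the image of A_T^*(X_E): f_sigma - f_sigma' divisible
   by t_{sigma(i)} - t_{sigma(i+1)} when sigma' = sigma o (i i+1). *)
Definition mdvd (n : nat) (a b : Tpoly n) : Prop := exists q, b = q * a.

Definition in_chowT (n : nat) (f : {ffun {perm 'I_n.+1} -> Tpoly n}) : Prop :=
  forall (s : {perm 'I_n.+1}) (i j : 'I_n.+1), val j = (val i).+1 ->
    mdvd (tvar (s i) - tvar (s j)) (f s - f (tperm i j * s)%g).

(* Non-equivariant Chow ring A^*(X_E) = A_T^*(X_E) / (t_0,...,t_n) A_T^*(X_E).
   The non-equivariant class of M is the image of the equivariant one
   (Chern classes commute with the forgetful map).  An element of A_T^*
   maps to zero in A^* iff it lies in the ideal (t_0,...,t_n) A_T^*. *)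
Definition chow_nonequiv_zero (n : nat) (f : {ffun {perm 'I_n.+1} -> Tpoly n})
  : Prop :=
  exists g : 'I_n.+1 -> {ffun {perm 'I_n.+1} -> Tpoly n},
    (forall j, in_chowT (g j)) /\
    forall s, f s = \sum_j tvar j * g j s.

Definition valuative_nonequiv (R : realType) (n : nat)
  (psiT : matroid n -> {ffun {perm 'I_n.+1} -> Tpoly n}) : Prop :=
  forall s : seq (int * matroid n),
    (forall x : 'I_n.+1 -> R, \sum_(p <- s) p.1 * indic_P p.2 x = 0) ->
    chow_nonequiv_zero (\sum_(p <- s) psiT p.2 *~ p.1).

(* Main.v *)
Require Import Defs.
From HB Require Import structures.
From mathcomp Require Import all_boot all_order all_algebra all_fingroup fraction.
From mathcomp Require Import boolp reals.
From mathcomp Require Import mpoly.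
From mathcomp Require Import lra ring zify.
Set Implicit Arguments.
Unset Strict Implicit.
Unset Printing Implicit Defensive.
Import Order.TTheory GRing.Theory Num.Theory.

Local Open Scope ring_scope.

Definition ind (P : Prop) : int := if `[< P >] then 1 else 0.
Lemma indT (P : Prop) : P -> ind P = 1.
Proof. by move=> p; rewrite /ind asboolT. Qed.
Lemma indF (P : Prop) : ~ P -> ind P = 0.
Proof. by move=> p; rewrite /ind asboolF. Qed.

Lemma eps_sum (R : realType) (T : Type) (s : seq T) (f : T -> R -> int) (g : T -> int) :
  (forall t, List.In t s -> exists2 e : R, 0 < e &
       forall e', 0 < e' -> e' <= e -> f t e' = g t) ->
  exists2 e : R, 0 < e & forall e', 0 < e' -> e' <= e ->
       \sum_(t <- s) f t e' = \sum_(t <- s) g t.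
Proof.
elim: s => [|t s IH] H.
  by exists 1 => // e' _ _; rewrite !big_nil.
have [e1 e1p H1] := H t (or_introl erefl).
have [e2 e2p H2] := IH (fun t' ht' => H t' (or_intror ht')).
exists (Order.min e1 e2); first by rewrite lt_min e1p e2p.
move=> e' e'p; rewrite le_min => /andP[h1 h2].
by rewrite !big_cons H1 // H2.
Qed.

Definition isMax (R : realType) (I : R -> Prop) (r : R) : Prop :=
  I r /\ forall y, r < y -> ~ I y.

Definition intervalish (R : realType) (I : R -> Prop) : Prop :=
  (forall x, ~ I x) \/ exists lo hi, lo <= hi /\ forall x, I x <-> lo <= x <= hi.

Lemma jump (R : realType) (T : Type) (s : seq T) (a : T -> int) (I : T -> R -> Prop) :
  (forall t, List.In t s -> intervalish (I t)) ->
  (forall x, \sum_(t <- s) a t * ind (I t x) = 0) ->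
  forall r, \sum_(t <- s) a t * ind (isMax (I t) r) = 0.
Proof.
move=> Hint Hsum r.
have H0 : forall t, List.In t s -> exists2 e : R, 0 < e & forall e', 0 < e' -> e' <= e ->
   (fun t e => a t * (ind (I t r) - ind (I t (r + e)))) t e' = (fun t => a t * ind (isMax (I t) r)) t.
  move=> t /Hint [Hemp|[lo [hi [lohi Hlh]]]].
    exists 1 => // e' _ _; rewrite !indF ?subrr ?mulr0 //.
    by case=> /Hemp.
  case: (ltgtP hi r) => [hir|rhi|hir].
  - exists 1 => // e' e'p _; rewrite !indF ?subrr ?mulr0 //.
    + by case => /Hlh /andP[_ h]; move: (le_lt_trans h hir); rewrite ltxx.
    + by move/Hlh => /andP[_ h]; lra.
    + by move/Hlh => /andP[_ h]; lra.
  - case: (lerP lo r) => [lor|rlo].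
      exists (hi - r); first by rewrite subr_gt0.
      move=> e' e'p e'le; rewrite (@indT (I t r)); last by apply/Hlh; rewrite lor ltW.
      rewrite (@indT (I t (r + e'))); last by apply/Hlh; apply/andP; split; lra.
      rewrite indF ?subrr ?mulr0 //.
      by case=> _ /(_ hi rhi); apply; apply/Hlh; rewrite lohi lexx.
    exists ((lo - r) / 2); first by lra.
    move=> e' e'p e'le; rewrite !indF ?subrr ?mulr0 //.
    + by case => /Hlh /andP[h _]; lra.
    + by move/Hlh => /andP[h _]; lra.
    + by move/Hlh => /andP[h _]; lra.
  - exists 1 => // e' e'p _.
    rewrite (@indT (I t r)); last by apply/Hlh; rewrite -hir lohi lexx.
    rewrite (@indT (isMax _ _)); last first.
      split; first by apply/Hlh; rewrite -hir lohi lexx.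
      by move=> y ry /Hlh /andP[_ h]; lra.
    rewrite indF; first by rewrite subr0.
    by move/Hlh => /andP[_ h]; lra.
have [e ep He] := eps_sum H0.
have := He e ep (lexx e).
rewrite -/(_ = _) => <-.
under eq_bigr do rewrite mulrBr.
by rewrite sumrB Hsum Hsum subrr.
Qed.

Local Open Scope ring_scope.

Lemma In_filter (T : Type) (P : pred T) t s : List.In t (filter P s) -> List.In t s.
Proof.
elim: s => [|u s IH] //=; case: (P u) => /=; last by move/IH; right.
by case=> [->|/IH]; [left|right].
Qed.

Lemma max_uniq (R : realType) (I : R -> Prop) r r' : isMax I r -> isMax I r' -> r = r'.
Proof.
move=> [h1 h2] [h3 h4]; case: (ltgtP r r') => // [/h2|/h4]; by [].
Qed.

Lemma jump_ne (R : realType) (T : Type) (s : seq T) (a : T -> int) (I : T -> R -> Prop) :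
  (forall t, List.In t s -> intervalish (I t)) ->
  (forall r, \sum_(t <- s) a t * ind (isMax (I t) r) = 0) ->
  \sum_(t <- s) a t * ind (exists x, I t x) = 0.
Proof.
move: {2}(size s) (leqnn (size s)) => k.
elim: k s => [|k IH] s.
  by case: s => // _ _ _; rewrite big_nil.
case: s => [|t s']; first by rewrite big_nil.
move=> /= hs Hint Hmax.
case: (Hint t (or_introl erefl)) => [Hemp|[lo [hi [lohi Hlh]]]].
  rewrite big_cons indF ?mulr0 ?add0r; last by case=> x /Hemp.
  apply: IH => //.
    by move=> u hu; apply: Hint; right.
  move=> r; have := Hmax r; rewrite big_cons indF ?mulr0 ?add0r //.
  by case=> /Hemp.
have Mt : isMax (I t) hi.
  split; first by apply/Hlh; rewrite lohi lexx.
  by move=> y hy /Hlh /andP[_ h]; lra.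
pose P := fun u => `[< isMax (I u) hi >].
rewrite (bigID P) /=.
have -> : \sum_(u <- t :: s' | P u) a u * ind (exists x, I u x) = 0.
  rewrite -[RHS](Hmax hi) [in RHS](bigID P) /=.
  rewrite [X in _ = _ + X]big1 ?addr0; last first.
    by move=> u /asboolPn hu; rewrite indF ?mulr0.
  apply: eq_bigr => u /asboolP hu; rewrite !indT //.
  by exists hi; case: hu.
rewrite add0r -big_filter.
apply: IH.
- rewrite /= /P asboolT //=.
  by rewrite size_filter; apply: leq_trans (count_size _ _) _.
- by move=> u hu; apply: Hint; exact: (In_filter hu).
- move=> r; rewrite big_filter.
  case: (eqVneq r hi) => [->|rhi].
    by rewrite big1 // => u /asboolPn hu; rewrite indF ?mulr0.
  rewrite -[RHS](Hmax r) [in RHS](bigID P) /=.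
  rewrite [X in _ = X + _]big1 ?add0r // => u /asboolP hu.
  rewrite indF ?mulr0 // => hu'.
  by move: rhi; rewrite (max_uniq hu' hu) eqxx.
Qed.

Local Open Scope ring_scope.

Lemma exmin (R : realType) (W : finType) (P : pred W) (F : W -> R) v1 :
  P v1 -> exists2 v, P v & forall u, P u -> F v <= F u.
Proof.
move=> Pv1; case: (@Order.TotalTheory.arg_minP _ R W v1 P F Pv1) => v Pv H.
by exists v.
Qed.

Definition Lam (R : realType) (W : finType) (cs : seq ((W -> R) * R)) (Z : {set W})
  (l : W -> R) : Prop :=
  [/\ forall v, 0 <= l v, \sum_v l v = 1,
      forall c, List.In c cs -> \sum_v c.1 v * l v = c.2 &
      forall v, v \in Z -> l v = 0].

Definition Hom (R : realType) (W : finType) (cs : seq ((W -> R) * R)) (Z : {set W})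
  (d : W -> R) : Prop :=
  [/\ \sum_v d v = 0,
      forall c, List.In c cs -> \sum_v c.1 v * d v = 0 &
      forall v, v \in Z -> d v = 0].

Lemma Lam_mono (R : realType) (W : finType) cs (Z : {set W}) v (l : W -> R) :
  Lam cs (v |: Z) l -> Lam cs Z l.
Proof.
by case=> h1 h2 h3 h4; split=> // u uZ; apply: h4; rewrite in_setU1 uZ orbT.
Qed.

Lemma Lam_shift (R : realType) (W : finType) cs (Z : {set W}) (l d : W -> R) (t : R) :
  Lam cs Z l -> Hom cs Z d -> (forall v, 0 <= l v + t * d v) ->
  Lam cs Z (fun v => l v + t * d v).
Proof.
case=> h1 h2 h3 h4 [g1 g2 g3] hp; split => //.
- by rewrite big_split /= -mulr_sumr g1 mulr0 addr0.
- move=> c hc; under eq_bigr do rewrite mulrDr mulrCA.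
  by rewrite big_split /= -mulr_sumr g2 // mulr0 addr0 h3.
- by move=> v vZ; rewrite h4 // g3 // mulr0 addr0.
Qed.

Lemma Lam_sub (R : realType) (W : finType) cs (Z : {set W}) (l1 l2 : W -> R) :
  Lam cs Z l1 -> Lam cs Z l2 -> Hom cs Z (fun v => l1 v - l2 v).
Proof.
case=> h1 h2 h3 h4 [g1 g2 g3 g4]; split.
- by rewrite sumrB h2 g2 subrr.
- by move=> c hc; under eq_bigr do rewrite mulrBr; rewrite sumrB h3 // g3 // subrr.
- by move=> v vZ; rewrite h4 // g4 // subrr.
Qed.

Lemma Hom_opp (R : realType) (W : finType) cs (Z : {set W}) (d : W -> R) :
  Hom cs Z d -> Hom cs Z (fun v => - d v).
Proof.
case=> g1 g2 g3; split.
- by rewrite sumrN g1 oppr0.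
- by move=> c hc; under eq_bigr do rewrite mulrN; rewrite sumrN g2 // oppr0.
- by move=> v vZ; rewrite g3 // oppr0.
Qed.

Lemma LPmax (R : realType) (W : finType) (cs : seq ((W -> R) * R)) (c : W -> R)
  (Z : {set W}) :
  (exists l, Lam cs Z l) ->
  exists l0, Lam cs Z l0 /\ forall l, Lam cs Z l -> \sum_v c v * l v <= \sum_v c v * l0 v.
Proof.
suff H : forall k (Z : {set W}), (#|~: Z| < k)%N -> (exists l, Lam cs Z l) ->
  exists l0, Lam cs Z l0 /\ forall l, Lam cs Z l -> \sum_v c v * l v <= \sum_v c v * l0 v.
  by apply: (H #|~: Z|.+1).
elim=> [//|k IH] {}Z hk [l1 Hl1].
case: (pselect (exists d, (exists v, d v != 0) /\ Hom cs Z d)); last first.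
  move=> nod; exists l1; split => // l Hl.
  have e : forall v, l v = l1 v.
    move=> v; apply/eqP; rewrite -subr_eq0; apply/negPn/negP => hv.
    by apply: nod; exists (fun v => l v - l1 v); split; [exists v|apply: Lam_sub].
  by rewrite le_eqVlt; apply/orP; left; apply/eqP; apply: eq_bigr => v _; rewrite e.
move=> [d [[v1 hv1] Hd]].
have [d' [[v2 hv2] [Hd' cpos]]] : exists d', (exists v, d' v != 0) /\ Hom cs Z d' /\
    0 <= \sum_v c v * d' v.
  case: (lerP 0 (\sum_v c v * d v)) => hc.
    by exists d; split; [exists v1|].
  exists (fun v => - d v); split; first by exists v1; rewrite oppr_eq0.
  split; first exact: Hom_opp.
  by under eq_bigr do rewrite mulrN; rewrite sumrN oppr_ge0 ltW.
have [vneg hvneg] : exists v, d' v < 0.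
  apply/not_existsP => hall; move/negP: hv2; apply; apply/eqP.
  case: Hd' => g1 _ _.
  apply: (psumr_eq0P (P := predT)) => // u _.
  by move: (hall u); rewrite real_ltNge ?real0 ?num_real //; move/negP/negPn.
have claim : forall l, Lam cs Z l -> exists v, v \notin Z /\
    exists l', Lam cs (v |: Z) l' /\ \sum_v c v * l v <= \sum_v c v * l' v.
  move=> l Hl.
  have [v0 hv0 hmin] := @exmin R W (fun v => d' v < 0) (fun v => l v / - d' v) vneg hvneg.
  have Hl0 := Hl; case: Hl0 => hl1 _ _ _.
  pose t := l v0 / - d' v0.
  have tpos : 0 <= t by rewrite /t divr_ge0 // oppr_ge0 ltW.
  have v0Z : v0 \notin Z.
    apply/negP => vZ; case: Hd' => _ _ g3.
    by move: hv0; rewrite g3 // ltxx.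
  exists v0; split => //.
  exists (fun v => l v + t * d' v); split.
    have nn : forall v, 0 <= l v + t * d' v.
      move=> v; case: (ltP (d' v) 0) => hv.
        have := hmin v hv; rewrite /= -/t ler_pdivlMr ?oppr_gt0 //.
        by rewrite mulrN -subr_ge0 opprK mulrC.
      by apply: addr_ge0 => //; apply: mulr_ge0.
    have := Lam_shift Hl Hd' nn; case=> h1 h2 h3 h4; split => // v.
    rewrite in_setU1 => /orP[/eqP ->|/h4] //.
    rewrite /t invrN mulrN mulNr -mulrA mulVf ?mulr1 ?subrr //.
    by rewrite lt_eqF.
  under [X in _ <= X]eq_bigr do rewrite mulrDr mulrCA.
  by rewrite big_split /= -mulr_sumr lerDl mulr_ge0.
have best : forall vs : seq W, (forall v, v \in vs -> v \notin Z) ->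
    (forall v, v \in vs -> forall l, ~ Lam cs (v |: Z) l) \/
    exists l0, Lam cs Z l0 /\ forall v, v \in vs -> forall l, Lam cs (v |: Z) l ->
      \sum_v c v * l v <= \sum_v c v * l0 v.
  elim=> [|v vs IHv] hvs; first by left.
  have hvs' : forall u, u \in vs -> u \notin Z by move=> u hu; apply: hvs; rewrite inE hu orbT.
  have hvZ : v \notin Z by apply: hvs; rewrite inE eqxx.
  have hcard : (#|~: (v |: Z)| < k)%N.
    rewrite -ltnS; apply: leq_trans hk; rewrite ltnS; apply: proper_card.
    rewrite setCU; apply/properP; split; first exact: subsetIr.
    by exists v; rewrite !inE ?eqxx // hvZ.
  case: (pselect (exists l, Lam cs (v |: Z) l)) => [ne|emp].
    have [mu [Hmu Hmumax]] := IH _ hcard ne.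
    case: (IHv hvs') => [left_|[l0 [Hl0 Hl0max]]].
      right; exists mu; split; first exact: Lam_mono Hmu.
      move=> u; rewrite inE => /orP[/eqP ->|hu] l Hl; first exact: Hmumax.
      by case: (left_ u hu l).
    case: (lerP (\sum_v c v * mu v) (\sum_v c v * l0 v)) => cmp.
      right; exists l0; split => // u; rewrite inE => /orP[/eqP ->|hu] l Hl.
        by apply: le_trans cmp; apply: Hmumax.
      exact: Hl0max hu _ Hl.
    right; exists mu; split; first exact: Lam_mono Hmu.
    move=> u; rewrite inE => /orP[/eqP ->|hu] l Hl; first exact: Hmumax.
    by apply: le_trans (ltW cmp); apply: (Hl0max u hu _ Hl).
  case: (IHv hvs') => [left_|[l0 [Hl0 Hl0max]]].
    left => u; rewrite inE => /orP[/eqP ->|hu] l Hl; first by apply: emp; exists l.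
    exact: (left_ u hu l Hl).
  right; exists l0; split => // u; rewrite inE => /orP[/eqP ->|hu] l Hl.
    by case: emp; exists l.
  exact: (Hl0max u hu _ Hl).
have hen : forall v, v \in enum (~: Z) -> v \notin Z by move=> v; rewrite mem_enum inE.
have [left_|[l0 [Hl0 Hl0max]]] := best (enum (~: Z)) hen.
  have [v [vZ [l' [Hl' _]]]] := claim l1 Hl1.
  by case: (left_ v _ l' Hl'); rewrite mem_enum inE.
exists l0; split => // l Hl.
have [v [vZ [l' [Hl' le1]]]] := claim l Hl.
by apply: le_trans le1 _; apply: Hl0max Hl'; rewrite mem_enum inE.
Qed.

Local Open Scope ring_scope.

Lemma ind_iff (P Q : Prop) : (P <-> Q) -> ind P = ind Q.
Proof. by move=> h; rewrite /ind (propext h). Qed.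

Lemma Lam_conv (R : realType) (W : finType) cs (Z : {set W}) (l1 l2 : W -> R) (t : R) :
  Lam cs Z l1 -> Lam cs Z l2 -> 0 <= t <= 1 ->
  Lam cs Z (fun v => t * l1 v + (1 - t) * l2 v).
Proof.
case=> h1 h2 h3 h4 [g1 g2 g3 g4] /andP[t0 t1]; split.
- by move=> v; apply: addr_ge0; apply: mulr_ge0 => //; rewrite subr_ge0.
- by rewrite big_split /= -!mulr_sumr h2 g2 !mulr1 addrC subrK.
- move=> c hc; under eq_bigr do rewrite mulrDr mulrCA [c.1 _ * (_ * _)]mulrCA.
  by rewrite big_split /= -!mulr_sumr h3 // g3 // -mulrDl addrC subrK mul1r.
- by move=> v vZ; rewrite h4 // g4 // !mulr0 addr0.
Qed.

Lemma Lam_cons (R : realType) (W : finType) cs (Z : {set W}) (c : W -> R) s l :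
  Lam ((c, s) :: cs) Z l <-> (\sum_v c v * l v = s /\ Lam cs Z l).
Proof.
split.
  case=> h1 h2 h3 h4; split; first exact: (h3 (c, s) (or_introl erefl)).
  by split => // c' hc'; apply: h3; right.
case=> hs [h1 h2 h3 h4]; split => // c' [<-|hc'] //; exact: h3.
Qed.

Lemma interval_Lam (R : realType) (W : finType) cs (Z : {set W}) (c : W -> R) :
  intervalish (fun x => exists l, Lam cs Z l /\ \sum_v c v * l v = x).
Proof.
case: (pselect (exists l, Lam cs Z l)) => [ne|emp]; last first.
  by left => x [l [hl _]]; apply: emp; exists l.
right.
have [lM [HlM HlMmax]] := LPmax c ne.
have [lm [Hlm Hlmmax]] := LPmax (fun v => - c v) ne.
exists (\sum_v c v * lm v), (\sum_v c v * lM v).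
have lmin : forall l, Lam cs Z l -> \sum_v c v * lm v <= \sum_v c v * l v.
  move=> l Hl; have := Hlmmax l Hl.
  by under eq_bigr do rewrite mulNr; under [X in _ <= X]eq_bigr do rewrite mulNr;
     rewrite !sumrN lerN2.
split; first exact: lmin.
move=> x; split.
  by case=> l [Hl <-]; rewrite lmin //= HlMmax.
move=> /andP[hlo hhi].
set lo := \sum_v c v * lm v in hlo *; set hi := \sum_v c v * lM v in hhi *.
case: (eqVneq hi lo) => [e|ne'].
  by exists lm; split => //; rewrite -/lo; apply/eqP; rewrite eq_le hlo -e hhi.
have hlt : 0 < hi - lo by rewrite subr_gt0 lt_neqAle eq_sym ne' (le_trans hlo hhi).
pose t := (x - lo) / (hi - lo).
have t01 : 0 <= t <= 1.
  apply/andP; split; first by rewrite /t; apply: divr_ge0; [rewrite subr_ge0|apply: ltW].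
  by rewrite /t ler_pdivrMr // mul1r; lra.
exists (fun v => t * lM v + (1 - t) * lm v); split; first exact: Lam_conv.
under eq_bigr do rewrite mulrDr mulrCA [c _ * (_ * _)]mulrCA.
rewrite big_split /= -!mulr_sumr -/lo -/hi /t.
field; by rewrite subr_eq0.
Qed.

Lemma big1_In (T : Type) (s : seq T) (P : pred T) (F : T -> int) :
  (forall u, List.In u s -> P u -> F u = 0) -> \sum_(u <- s | P u) F u = 0.
Proof.
elim: s => [|u s IH] H; first by rewrite big_nil.
rewrite big_cons IH; last by move=> w hw; apply: H; right.
by case: ifP => // Pu; rewrite H //; left.
Qed.

Lemma chi0 (X T : Type) (s : seq T) (a : T -> int) (S : T -> X -> Prop) :
  (forall t, List.In t s -> forall x y, S t x -> S t y -> x = y) ->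
  (forall x, \sum_(t <- s) a t * ind (S t x) = 0) ->
  \sum_(t <- s) a t * ind (exists x, S t x) = 0.
Proof.
move: {2}(size s) (leqnn (size s)) => k.
elim: k s => [|k IH] s.
  by case: s => // _ _ _; rewrite big_nil.
case: s => [|t s']; first by rewrite big_nil.
move=> /= hs Hsub Hrel.
case: (pselect (exists p, S t p)) => [[p Sp]|emp].
  pose P := fun u => `[< S u p >].
  rewrite (bigID P) /=.
  have -> : \sum_(u <- t :: s' | P u) a u * ind (exists x, S u x) = 0.
    rewrite -[RHS](Hrel p) [in RHS](bigID P) /=.
    rewrite [X in _ = _ + X]big1 ?addr0; last first.
      by move=> u /asboolPn hu; rewrite indF ?mulr0.
    apply: eq_bigr => u /asboolP hu; rewrite !indT //.
    by exists p.
  rewrite add0r -big_filter.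
  apply: IH.
  - rewrite /= /P asboolT //=.
    by rewrite size_filter; apply: leq_trans (count_size _ _) _.
  - by move=> u hu; apply: Hsub; exact: (In_filter hu).
  - move=> x; rewrite big_filter.
    case: (pselect (x = p)) => [->|xp].
      by rewrite big1 // => u /asboolPn hu; rewrite indF ?mulr0.
    rewrite -[RHS](Hrel x) [in RHS](bigID P) /=.
    rewrite [X in _ = X + _]big1_In ?add0r // => u hin /asboolP hu.
    rewrite indF ?mulr0 // => hu'; apply: xp.
    exact: (Hsub u hin x p hu' hu).
rewrite big_cons indF ?mulr0 ?add0r //.
apply: IH => //.
  by move=> u hu; apply: Hsub; right.
move=> x; have := Hrel x; rewrite big_cons indF ?mulr0 ?add0r //.
by move=> h; apply: emp; exists x.
Qed.

Local Open Scope ring_scope.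

Definition Kset (R : realType) (N : nat) (W : finType) (V : W -> 'I_N -> R)
  (cs : seq ((W -> R) * R)) (Z : {set W}) (x : 'I_N -> R) : Prop :=
  exists l, Lam cs Z l /\ forall i, x i = \sum_v l v * V v i.

Definition coordf (R : realType) (N : nat) (W : finType) (V : W -> 'I_N -> R) (i : 'I_N) :
  W -> R := fun v => V v i.

Lemma Kset_slice (R : realType) (N : nat) (W : finType) (V : W -> 'I_N -> R) cs Z i s x :
  Kset V ((coordf V i, s) :: cs) Z x <-> Kset V cs Z x /\ x i = s.
Proof.
split.
  case=> l [/Lam_cons [hs hl] hx]; split; first by exists l.
  by rewrite hx -hs; apply: eq_bigr => v _; rewrite mulrC.
case=> [[l [hl hx]] hs]; exists l; split => //; apply/Lam_cons; split => //.
by rewrite -hs hx; apply: eq_bigr => v _; rewrite mulrC.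
Qed.

Lemma Kset_ne (R : realType) (N : nat) (W : finType) (V : W -> 'I_N -> R) cs Z :
  (exists x, Kset V cs Z x) <-> exists l, Lam cs Z l.
Proof.
split; first by case=> x [l [hl _]]; exists l.
by case=> l hl; exists (fun i => \sum_v l v * V v i); exists l.
Qed.

Lemma intervalish_iff (R : realType) (I J : R -> Prop) :
  (forall x, I x <-> J x) -> intervalish J -> intervalish I.
Proof.
move=> h [e|[lo [hi [lh H]]]]; first by left => x /h /e.
by right; exists lo, hi; split => // x; rewrite h.
Qed.

Definition Qk (R : realType) (N : nat) (W : finType) (V : W -> 'I_N -> R) (k : nat)
  cs Z : Prop :=
  forall x y, Kset V cs Z x -> Kset V cs Z y ->
    (forall i : 'I_N, (i < k)%N -> x i = y i) -> x = y.

Lemma chi (R : realType) (N : nat) (W : finType) (V : W -> 'I_N -> R) :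
  forall k, (k <= N)%N -> forall (s : seq (int * (seq ((W -> R) * R) * {set W}))),
  (forall p, List.In p s -> Qk V k p.2.1 p.2.2) ->
  (forall x, \sum_(p <- s) p.1 * ind (Kset V p.2.1 p.2.2 x) = 0) ->
  \sum_(p <- s) p.1 * ind (exists x, Kset V p.2.1 p.2.2 x) = 0.
Proof.
elim=> [|k IH] hk s HQ Hrel.
  apply: (@chi0 _ _ s (fun p => p.1) (fun p x => Kset V p.2.1 p.2.2 x)) => //.
  by move=> t ht x y kx ky; apply: (HQ t ht x y kx ky) => i; rewrite ltn0.
pose i := Ordinal hk.
pose I := fun (p : int * (seq ((W -> R) * R) * {set W})) x0 =>
  exists x, Kset V ((coordf V i, x0) :: p.2.1) p.2.2 x.
have Hslice : forall x0, \sum_(p <- s) p.1 * ind (I p x0) = 0.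
  move=> x0.
  have := IH (ltnW hk) (map (fun p => (p.1, ((coordf V i, x0) :: p.2.1, p.2.2))) s).
  rewrite big_map; apply.
    move=> p' /List.in_map_iff [p [<- hp]] x y kx ky hxy /=.
    move: kx ky => /Kset_slice [kx ex] /Kset_slice [ky ey].
    apply: (HQ p hp x y kx ky) => i' hi'.
    case: (ltnP i' k) => h; first exact: hxy.
    have -> : i' = i by apply/val_inj => /=; apply/eqP; rewrite eqn_leq h -ltnS hi'.
    by rewrite ex ey.
  move=> x; rewrite big_map /=.
  case: (pselect (x i = x0)) => e.
    rewrite -[RHS](Hrel x); apply: eq_bigr => p _; congr (_ * _); apply: ind_iff.
    by rewrite Kset_slice; split; [case|].
  by rewrite big1 // => p _; rewrite indF ?mulr0 // => /Kset_slice [].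
have Hint : forall p, List.In p s -> intervalish (I p).
  move=> p _; apply: intervalish_iff (interval_Lam p.2.1 p.2.2 (coordf V i)).
  move=> x0; rewrite /I Kset_ne; split.
    by case=> l /Lam_cons [h1 h2]; exists l.
  by case=> l [h1 h2]; exists l; apply/Lam_cons.
have := jump_ne Hint (jump Hint Hslice).
move=> h; rewrite -[RHS]h; apply: eq_bigr => p _; congr (_ * _); apply: ind_iff; split.
  by case=> x kx; exists (x i); exists x; apply/Kset_slice.
by case=> x0 [x /Kset_slice [kx _]]; exists x.
Qed.

Local Close Scope ring_scope.

Definition rho (n : nat) (s : {perm 'I_n.+1}) (j : 'I_n.+1) : nat := (s^-1)%g j.
Definition wN (n : nat) (s : {perm 'I_n.+1}) (j : 'I_n.+1) : nat := n.+2 ^ (n - rho s j).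
Definition wvN (n : nat) (s : {perm 'I_n.+1}) (B : {set 'I_n.+1}) : nat :=
  \sum_(j in B) wN s j.

Lemma rho_inj n (s : {perm 'I_n.+1}) : injective (rho s).
Proof. by move=> i j /val_inj /perm_inj. Qed.

Lemma rho_le n (s : {perm 'I_n.+1}) j : (rho s j <= n)%N.
Proof. by rewrite /rho -ltnS ltn_ord. Qed.

Lemma sum_sub_le (T : finType) (P Q : pred T) (F : T -> nat) :
  (forall j, P j -> Q j) -> (\sum_(j | P j) F j <= \sum_(j | Q j) F j)%N.
Proof.
move=> h; rewrite [X in (X <= _)%N]big_mkcond [X in (_ <= X)%N]big_mkcond /=.
apply: leq_sum => j _; case: ifP => // /h ->; exact: leqnn.
Qed.

Lemma tail_lt n (s : {perm 'I_n.+1}) i :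
  (\sum_(j | (rho s i < rho s j)%N) wN s j < wN s i)%N.
Proof.
rewrite -(ltn_pmul2l (isT : (0 < n.+2)%N)) big_distrr /=.
apply: (@leq_ltn_trans (\sum_(j : 'I_n.+1) wN s i)).
  apply: (@leq_trans (\sum_(j | (rho s i < rho s j)%N) wN s i)).
    apply: leq_sum => j hj; rewrite /wN -expnS leq_pexp2l //.
    have := rho_le s j; lia.
  exact: (@sum_sub_le _ _ predT (fun _ => wN s i)).
rewrite sum_nat_const card_ord.
by rewrite ltn_pmul2r ?expn_gt0.
Qed.

Lemma lex_lt_w n (s : {perm 'I_n.+1}) (B B' : {set 'I_n.+1}) i :
  i \in B -> i \notin B' ->
  (forall j, (rho s j < rho s i)%N -> (j \in B) = (j \in B')) ->
  (wvN s B' < wvN s B)%N.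
Proof.
move=> iB iB' hj.
rewrite /wvN (bigID (fun j => (rho s j < rho s i)%N)) /=.
rewrite [X in (_ < X)%N](bigID (fun j => (rho s j < rho s i)%N)) /=.
have -> : \sum_(j in B | (rho s j < rho s i)%N) wN s j =
          \sum_(j in B' | (rho s j < rho s i)%N) wN s j.
  by apply: eq_bigl => j; case: ltnP => h; rewrite ?andbT ?andbF // hj.
rewrite ltn_add2l.
apply: (@leq_trans (wN s i)).
  apply: leq_ltn_trans (tail_lt s i).
  apply: sum_sub_le => j /andP[jB' hle]; rewrite ltn_neqAle leqNgt hle andbT.
  by apply/eqP => /rho_inj e; move: jB'; rewrite -e (negbTE iB').
rewrite (bigD1 i) /=; last by rewrite iB ltnn.
exact: leq_addr.
Qed.

Definition lexlt n (s : {perm 'I_n.+1}) (B B' : {set 'I_n.+1}) : bool :=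
  [exists i in B :\: B',
     forall j, ((s^-1)%g j < (s^-1)%g i)%N ==> ((j \in B) == (j \in B'))].

Lemma lexlt_w n (s : {perm 'I_n.+1}) B B' : lexlt s B B' -> (wvN s B' < wvN s B)%N.
Proof.
case/existsP => i /andP[]; rewrite inE => /andP[iB' iB] /forallP h.
apply: (lex_lt_w (i := i)) => // j hj.
by apply/eqP; move/implyP: (h j); apply.
Qed.

Lemma lex_total n (s : {perm 'I_n.+1}) (B B' : {set 'I_n.+1}) :
  B != B' -> lexlt s B B' || lexlt s B' B.
Proof.
move=> neq.
have [j0 hj0] : exists j, (j \in B) != (j \in B').
  apply/existsP; apply: contraR neq => /existsPn h; apply/eqP/setP => j.
  by move: (h j); rewrite negbK => /eqP.
case: (@arg_minnP _ j0 (fun j => (j \in B) != (j \in B')) (rho s) hj0) => i hi hmin.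
have agree : forall j, ((s^-1)%g j < (s^-1)%g i)%N ==> ((j \in B) == (j \in B')).
  move=> j; apply/implyP => hlt; apply/negPn/negP => hne.
  by move: (hmin j hne); rewrite leqNgt hlt.
case iB: (i \in B) in hi.
  apply/orP; left; apply/existsP; exists i; rewrite !inE iB andbT.
  have -> : i \notin B' by move: hi; case: (i \in B').
  by apply/forallP.
apply/orP; right; apply/existsP; exists i; rewrite !inE iB /=.
have -> : i \in B' by move: hi; case: (i \in B').
apply/forallP => j; by move: (agree j); rewrite eq_sym.
Qed.

Lemma wvN_inj n (s : {perm 'I_n.+1}) B B' : wvN s B = wvN s B' -> B = B'.
Proof.
move=> e; apply/eqP; apply/negPn/negP => /(lex_total s) /orP[] /lexlt_w; by rewrite e ltnn.
Qed.

Lemma lexfirst_spec n (M : matroid n) (s : {perm 'I_n.+1}) :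
  lexfirst_basis M s \in bases M /\
  forall B', B' \in bases M -> (wvN s B' <= wvN s (lexfirst_basis M s))%N.
Proof.
have [B1 hB1] : exists B, B \in bases M by apply/set0Pn; exact: bases_neq0.
case: (arg_maxnP (wvN s) hB1) => B0 hB0 hmax.
rewrite /lexfirst_basis; case: pickP => [B /andP[hB /forallP hall]|none] /=.
  split => // B' hB'; move/implyP: (hall B') => /(_ hB').
  case/orP => [/eqP -> //|hl]; exact: ltnW (lexlt_w hl).
exfalso; suff : (B0 \in bases M) && [forall B' in bases M, lex_le s B0 B'] by rewrite none.
apply/andP; split; first exact: hB0.
apply/forallP => B'; apply/implyP => hB'.
case: (eqVneq B0 B') => [->|ne]; first by rewrite /lex_le eqxx.
case/orP: (lex_total s ne) => hl; first by rewrite /lex_le; apply/orP; right; exact: hl.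
by move: (hmax B' hB') => /=; rewrite leqNgt (lexlt_w hl).
Qed.

Local Open Scope ring_scope.

Local Open Scope ring_scope.

Definition Vm (R : realType) (n : nat) (v : {set 'I_n.+1}) (i : 'I_n.+1) : R :=
  (i \in v)%:R.

Definition wv (R : realType) (n : nat) (s : {perm 'I_n.+1}) (v : {set 'I_n.+1}) : R :=
  \sum_i (wN s i)%:R * Vm R v i.

Lemma wv_nat (R : realType) n (s : {perm 'I_n.+1}) (v : {set 'I_n.+1}) : wv R s v = (wvN s v)%:R :> R.
Proof.
rewrite /wv /wvN natr_sum [RHS]big_mkcond /=; apply: eq_bigr => i _.
by rewrite /Vm; case: (i \in v); rewrite ?mulr1 ?mulr0.
Qed.

Lemma Kset_lin (R : realType) (N : nat) (W : finType) (V : W -> 'I_N -> R)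
  (w : 'I_N -> R) (c : W -> R) cs Z s x :
  (forall v, c v = \sum_i w i * V v i) ->
  Kset V ((c, s) :: cs) Z x <-> Kset V cs Z x /\ \sum_i w i * x i = s.
Proof.
move=> hc.
have key : forall l, (forall i, x i = \sum_v l v * V v i) ->
    \sum_v c v * l v = \sum_i w i * x i.
  move=> l hx.
  rewrite [RHS](eq_bigr (fun i => \sum_v w i * (l v * V v i))); last first.
    by move=> i _; rewrite hx mulr_sumr.
  rewrite exchange_big /=; apply: eq_bigr => v _; rewrite hc mulr_suml.
  by apply: eq_bigr => i _; rewrite -mulrA (mulrC (V v i)).
split.
  case=> l [/Lam_cons [hs hl] hx]; split; first by exists l.
  by rewrite -(key l hx).
case=> [[l [hl hx]] hs]; exists l; split => //; apply/Lam_cons; split => //.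
by rewrite (key l hx).
Qed.

Lemma inP_K (R : realType) n (M : matroid n) (x : 'I_n.+1 -> R) :
  in_base_polytope M x <-> Kset (@Vm R n) [::] (~: bases M) x.
Proof.
split.
  case=> l [h1 h2 h3 h4]; exists l; split => //.
  split => // v; rewrite inE; exact: h2.
case=> l [[h1 h2 _ h4] hx]; exists l; split => //.
by move=> B hB; apply: h4; rewrite inE.
Qed.

Lemma key (R : realType) n (s0 : seq (int * matroid n)) :
  (forall x : 'I_n.+1 -> R, \sum_(p <- s0) p.1 * indic_P p.2 x = 0) ->
  forall (s : {perm 'I_n.+1}) (B : {set 'I_n.+1}),
    \sum_(p <- s0) p.1 * ind (lexfirst_basis p.2 s = B) = 0.
Proof.
move=> hrel s B.
pose c := wv R s.
pose I := fun (p : int * matroid n) y =>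
  exists x, Kset (@Vm R n) [:: (c, y)] (~: bases p.2) x.
have hc : forall v, c v = \sum_i (wN s i)%:R * Vm R v i by [].
have Hslice : forall y, \sum_(p <- s0) p.1 * ind (I p y) = 0.
  move=> y.
  have := @chi R n.+1 _ (@Vm R n) n.+1 (leqnn _)
    (map (fun p => (p.1, ([:: (c, y)], ~: bases p.2))) s0).
  rewrite big_map; apply.
    move=> p' /List.in_map_iff [p [<- hp]] x x' kx kx' hxx.
    by apply: funext => i; apply: hxx; exact: ltn_ord.
  move=> x; rewrite big_map /=.
  case: (pselect (\sum_i (wN s i)%:R * x i = y)) => e.
    rewrite -[RHS](hrel x); apply: eq_bigr => p _; congr (_ * _).
    rewrite /indic_P -/(ind _); apply: ind_iff.
    rewrite (Kset_lin _ _ _ _ hc) inP_K; split; [by case|by move=> h; split].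
  rewrite big1 // => p _; rewrite indF ?mulr0 //.
  by move/(Kset_lin _ _ _ _ hc) => [].
have Hint : forall p, List.In p s0 -> intervalish (I p).
  move=> p _; apply: intervalish_iff (interval_Lam [::] (~: bases p.2) c).
  move=> y; rewrite /I Kset_ne; split.
    by case=> l /Lam_cons [h1 h2]; exists l.
  by case=> l [h1 h2]; exists l; apply/Lam_cons.
have := jump Hint Hslice (c B).
move=> h; rewrite -[RHS]h; apply: eq_bigr => p _; congr (_ * _); apply: ind_iff.
set M := p.2; set Bs := lexfirst_basis M s.
have [hBs hBmax] := lexfirst_spec M s.
have IE : forall y, I p y <-> exists l, Lam [::] (~: bases M) l /\ \sum_v c v * l v = y.
  move=> y; rewrite /I Kset_ne; split.
    by case=> l /Lam_cons [h1 h2]; exists l.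
  by case=> l [h1 h2]; exists l; apply/Lam_cons.
have bound : forall l, Lam [::] (~: bases M) l -> \sum_v c v * l v <= c Bs.
  move=> l [l0 l1 _ l3].
  apply: (@le_trans _ _ (\sum_v c Bs * l v)); last by rewrite -mulr_sumr l1 mulr1.
  apply: ler_sum => v _; case: (boolP (v \in bases M)) => hv.
    by apply: ler_wpM2r => //; rewrite /c !wv_nat ler_nat hBmax.
  by rewrite l3 ?mulr0 // inE.
have Ipt : I p (c Bs).
  apply/IE; exists (fun v => (v == Bs)%:R); split.
    split.
    - by move=> v; rewrite ler0n.
    - by rewrite (bigD1 Bs) //= eqxx big1 ?addr0 // => v /negbTE ->.
    - by [].
    - by move=> v; rewrite inE => hv; case: eqP hv => // -> ; rewrite hBs.
  by rewrite (bigD1 Bs) //= eqxx mulr1 big1 ?addr0 // => v /negbTE ->; rewrite mulr0.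
apply: iff_sym; rewrite /isMax; split.
  case=> hI hmax.
  have le1 : c Bs <= c B.
    rewrite leNgt; apply/negP => hlt; exact: (hmax _ hlt Ipt).
  have [l [hl hl2]] := (IE (c B)).1 hI.
  have le2 : c B <= c Bs by rewrite -hl2; exact: bound.
  have : c Bs = c B by apply/eqP; rewrite eq_le le1 le2.
  by rewrite /c !wv_nat => /eqP; rewrite eqr_nat => /eqP /wvN_inj.
move=> e; rewrite -/Bs in e; rewrite -e; split => // y hy /IE [l [hl hl2]].
by move: (bound l hl); rewrite hl2 leNgt hy.
Qed.

Local Open Scope ring_scope.

Lemma valuative_lex (R : realType) n (A : zmodType)
  (H : {perm 'I_n.+1} -> {set 'I_n.+1} -> A)
  (phi : matroid n -> {ffun {perm 'I_n.+1} -> A}) :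
  (forall M s, phi M s = H s (lexfirst_basis M s)) ->
  valuative R phi.
Proof.
move=> hphi s0 hrel; apply/ffunP => s.
rewrite sum_ffunE ffunE.
have e : forall p : int * matroid n, phi p.2 s *~ p.1 =
    \sum_(B : {set 'I_n.+1}) H s B *~ (p.1 * ind (lexfirst_basis p.2 s = B)).
  move=> p; rewrite hphi (bigD1 (lexfirst_basis p.2 s)) //= indT // mulr1.
  rewrite big1 ?addr0 // => B hB; rewrite indF ?mulr0 ?mulr0z //.
  by move=> e; move: hB; rewrite e eqxx.
under eq_bigr do rewrite ffunMzE e.
rewrite exchange_big /= big1 // => B _.
by rewrite -mulrz_sumr (key hrel) mulr0z.
Qed.

Definition Eb (n : nat) (B : {set 'I_n.+1}) (c : 'I_4) (k : nat) : Laurent n :=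
  match val c with
  | 0 => Defs.esym k B (fun i => (Tvar i)^-1)
  | 1 => Defs.esym k (~: B) (fun i => (Tvar i)^-1)
  | 2 => Defs.esym k B (@Tvar n)
  | _ => Defs.esym k (~: B) (@Tvar n)
  end.

Definition Cb (n : nat) (B : {set 'I_n.+1}) (c : 'I_4) (k : nat) : Tpoly n :=
  match val c with
  | 0 => Defs.esym k B (fun i => - tvar i)
  | 1 => Defs.esym k (~: B) (fun i => - tvar i)
  | 2 => Defs.esym k B (@tvar n)
  | _ => Defs.esym k (~: B) (@tvar n)
  end.

Theorem proposition5p6 (R : realType) (n : nat)
  (m : nat) (F : {mpoly int[m]}%R) (idx : 'I_m -> 'I_4 * nat)
  (m' : nat) (G : {mpoly int[m']}%R) (idx' : 'I_m' -> 'I_4 * nat) :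
  [/\ valuative R (@K_class n m F idx),
      valuative R (@chow_classT n m' G idx') &
      valuative_nonequiv R (@chow_classT n m' G idx')].
Proof.
have v1 : valuative R (@K_class n m F idx).
  apply: (valuative_lex (H := fun s B => ieval (fun j => Eb B (idx j).1 (idx j).2) F)).
  by move=> M s; rewrite ffunE.
have v2 : valuative R (@chow_classT n m' G idx').
  apply: (valuative_lex (H := fun s B => ieval (fun j => Cb B (idx' j).1 (idx' j).2) G)).
  by move=> M s; rewrite ffunE.
have z0 : forall x, (0 : {ffun {perm 'I_n.+1} -> Tpoly n}) x = 0.
  by move=> x; rewrite /GRing.zero /= ffunE.
split => // s0 hrel; rewrite (v2 s0 hrel).
exists (fun _ => 0); split.
  by move=> j s i k _; exists 0; rewrite !z0 subr0 mul0r.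
move=> s; rewrite {1}/GRing.zero /= ffunE big1 // => j _; rewrite mulr0. reflexivity.
Qed.
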